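(* Let $O$ be the origin of $\mathbb{R}^3$ and $R>0$. Let $x:[0,\tau_1]\to\mathbb{R}^3$ be a twice continuously differentiable trajectory with nowhere-vanishing velocity, satisfying $\ddot x(\tau) = -\kappa(\tau)\,x(\tau)$ with $\kappa(\tau)>0$ for all $\tau$, with $A_0 = x(0)$, $|A_0|<R$, and let $B$ be the first point of the trajectory on the sphere $\{|p|=R\}$. Reparametrize the trajectory from $A_0$ to $B$ by arclength $\sigma\in[0,L_{A_0B}]$, where $L_{A_0B}$ is the arclength from $A_0$ to $B$. Define iteratively $\sigma_0=0$ and, for $t\ge 0$: $A_t$ is the point of the trajectory at arclength $\sigma_t$, $d_t$ is the unit tangent direction of the trajectory at $A_t$, $P_t = A_t + u\,d_t$ is the point where the straight ray from $A_t$ in direction $d_t$ meets the sphere $\{|p|=R\}$ (with $u\ge 0$, and $P_t=A_t$ if $A_t$ is on the sphere), $s_t = |A_tP_t|$, and $\sigma_{t+1}=\sigma_t+s_t$. Then $$\lim_{T\to\infty}\sum_{t=0}^{T} s_t = L_{A_0B}.$$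
   Context: This models an iterative ray-tracing step scheme inside the near-field ball of radius $R$ around a black hole centered at $O$, where gravity is approximated by Newtonian attraction toward the center: at each step the ray is advanced along its true (curved) path by the straight-line distance from the current point, along the current tangent direction, to the boundary sphere. $|A_tP_t|$ denotes Euclidean distance. *)

(* Defs.v *)
From Stdlib Require Import Reals.
From Coquelicot Require Import Coquelicot.
Open Scope R_scope.

Definition vec : Type := (R * R * R)%type.

Definition vx (a : vec) : R := fst (fst a).
Definition vy (a : vec) : R := snd (fst a).
Definition vz (a : vec) : R := snd a.

Definition vzero : vec := (0, 0, 0).
Definition vadd (a b : vec) : vec := (vx a + vx b, vy a + vy b, vz a + vz b).
Definition vsub (a b : vec) : vec := (vx a - vx b, vy a - vy b, vz a - vz b).
Definition vscale (k : R) (a : vec) : vec := (k * vx a, k * vy a, k * vz a).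

Definition dot (a b : vec) : R := vx a * vx b + vy a * vy b + vz a * vz b.
Definition enorm (a : vec) : R := sqrt (dot a a).

Definition dist3 (A P : vec) : R := enorm (vsub P A).

Definition unit_dir (w : vec) : vec := vscale (/ enorm w) w.

Definition ray_exit (Rad : R) (A d P : vec) : Prop :=
  (exists u : R, 0 <= u /\ P = vadd A (vscale u d)) /\
  enorm P = Rad /\
  (enorm A = Rad -> P = A).

Definition arclength (v : R -> vec) (t : R) : R :=
  RInt (fun r => enorm (v r)) 0 t.

Definition cont_on_at (t1 : R) (f : R -> vec) (t : R) : Prop :=
  filterlim f (within (fun r => 0 <= r <= t1) (locally t)) (locally (f t)).

(* Main.v *)
Require Import Defs.
From Stdlib Require Import Reals.
From Coquelicot Require Import Coquelicot.
From Stdlib Require Import Lra Nsatz ClassicalEpsilon.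
Open Scope R_scope.


Lemma d_val (f : R -> R) x l l' : is_derive f x l -> l = l' -> is_derive f x l'.
Proof. intros H ->; exact H. Qed.
Lemma d_plus (f g : R -> R) x df dg : is_derive f x df -> is_derive g x dg ->
  is_derive (fun t => f t + g t) x (df + dg).
Proof. intros; apply (is_derive_plus f g); auto. Qed.
Lemma d_minus (f g : R -> R) x df dg : is_derive f x df -> is_derive g x dg ->
  is_derive (fun t => f t - g t) x (df - dg).
Proof. intros; apply (is_derive_minus f g); auto. Qed.
Lemma d_mult (f g : R -> R) x df dg : is_derive f x df -> is_derive g x dg ->
  is_derive (fun t => f t * g t) x (df * g x + f x * dg).
Proof. intros; apply (is_derive_mult f g); auto. intros; apply Rmult_comm. Qed.
Lemma d_const (c x : R) : is_derive (fun _ => c) x 0.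
Proof. apply (is_derive_const c x). Qed.
Lemma d_div (f g : R -> R) x df dg : is_derive f x df -> is_derive g x dg -> g x <> 0 ->
  is_derive (fun t => f t / g t) x ((df * g x - f x * dg) / g x ^ 2).
Proof. intros; apply is_derive_div; auto. Qed.
Lemma d_sqrt (f : R -> R) x df : is_derive f x df -> 0 < f x ->
  is_derive (fun t => sqrt (f t)) x (df / (2 * sqrt (f x))).
Proof. intros; apply (is_derive_sqrt f); auto. Qed.

Lemma c_plus (f g : R -> R) x : continuous f x -> continuous g x -> continuous (fun t => f t + g t) x.
Proof. intros; apply (continuous_plus f g); auto. Qed.
Lemma c_minus (f g : R -> R) x : continuous f x -> continuous g x -> continuous (fun t => f t - g t) x.
Proof. intros; apply (continuous_minus f g); auto. Qed.
Lemma c_mult (f g : R -> R) x : continuous f x -> continuous g x -> continuous (fun t => f t * g t) x.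
Proof. intros; apply (continuous_mult f g); auto. Qed.
Lemma c_const (c x : R) : continuous (fun _ : R => c) x.
Proof. apply continuous_const. Qed.
Lemma c_div (f g : R -> R) x : continuous f x -> continuous g x -> g x <> 0 -> continuous (fun t => f t / g t) x.
Proof. intros; unfold Rdiv; apply c_mult; auto. apply continuous_Rinv_comp; auto. Qed.
Lemma c_sqrt (f : R -> R) x : continuous f x -> continuous (fun t => sqrt (f t)) x.
Proof. intros; apply continuous_sqrt_comp; auto. Qed.

Lemma mono (f df : R -> R) a b : a <= b -> (forall t, continuous f t) ->
  (forall t, a < t < b -> is_derive f t (df t)) -> (forall t, a < t < b -> 0 <= df t) ->
  f a <= f b.
Proof.
  intros Hab Hc Hd Hp.
  destruct (MVT_gen f a b (fun t => Rmax 0 (df t))) as [c [_ Hc']].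
  - intros t Ht. rewrite Rmin_left in Ht by lra. rewrite Rmax_right in Ht by lra.
    rewrite Rmax_right by (apply Hp; lra). apply Hd; lra.
  - intros t _. apply continuity_pt_filterlim. apply Hc.
  - assert (0 <= Rmax 0 (df c)) by apply Rmax_l. nra.
Qed.


Definition q3 (a b c : R) := a*a + b*b + c*c.
Definition d3 (a b c x y z : R) := a*x + b*y + c*z.

Lemma cs3 a b c x y z : (d3 a b c x y z)^2 <= q3 a b c * q3 x y z.
Proof.
  assert (E: q3 a b c * q3 x y z - (d3 a b c x y z)^2 = (a*y-b*x)^2 + (a*z-c*x)^2 + (b*z-c*y)^2)
    by (unfold q3, d3; ring).
  assert (0 <= (a*y-b*x)^2 + (a*z-c*x)^2 + (b*z-c*y)^2)
    by (repeat apply Rplus_le_le_0_compat; apply pow2_ge_0).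
  lra.
Qed.

Lemma core (X1 X2 X3 V1 V2 V3 k S : R -> R) (t0 t1 : R) :
  t0 <= t1 ->
  (forall t, continuous X1 t) -> (forall t, continuous X2 t) -> (forall t, continuous X3 t) ->
  (forall t, continuous V1 t) -> (forall t, continuous V2 t) -> (forall t, continuous V3 t) ->
  (forall t, t0 < t < t1 -> is_derive X1 t (V1 t)) ->
  (forall t, t0 < t < t1 -> is_derive X2 t (V2 t)) ->
  (forall t, t0 < t < t1 -> is_derive X3 t (V3 t)) ->
  (forall t, t0 < t < t1 -> is_derive V1 t (- k t * X1 t)) ->
  (forall t, t0 < t < t1 -> is_derive V2 t (- k t * X2 t)) ->
  (forall t, t0 < t < t1 -> is_derive V3 t (- k t * X3 t)) ->
  (forall t, t0 < t < t1 -> 0 < k t) ->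
  (forall t, 0 < q3 (V1 t) (V2 t) (V3 t)) ->
  (forall t, is_derive S t (sqrt (q3 (V1 t) (V2 t) (V3 t)))) ->
  S t0 = 0 ->
  q3 (X1 t1) (X2 t1) (X3 t1) <= q3 (X1 t0) (X2 t0) (X3 t0)
     + 2 * S t1 * (d3 (X1 t0) (X2 t0) (X3 t0) (V1 t0) (V2 t0) (V3 t0) / sqrt (q3 (V1 t0) (V2 t0) (V3 t0)))
     + S t1 ^ 2.
Proof.
  intros H01 cX1 cX2 cX3 cV1 cV2 cV3 dX1 dX2 dX3 dV1 dV2 dV3 Hk Hq HS HS0.
  set (w := fun t => sqrt (q3 (V1 t) (V2 t) (V3 t))).
  set (xv := fun t => d3 (X1 t) (X2 t) (X3 t) (V1 t) (V2 t) (V3 t)).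
  set (G := fun t => q3 (X1 t) (X2 t) (X3 t)).
  set (b := xv t0 / w t0).
  assert (wpos : forall t, 0 < w t) by (intro t; apply sqrt_lt_R0; auto).
  assert (wsq : forall t, w t * w t = q3 (V1 t) (V2 t) (V3 t))
    by (intro t; apply sqrt_sqrt; apply Rlt_le; auto).
  assert (cS : forall t, continuous S t) by (intro t; apply (ex_derive_continuous (K:=R_AbsRing) (V:=R_NormedModule) S); eexists; apply HS).
  assert (cxv : forall t, continuous xv t).
  { intro t; unfold xv, d3. repeat apply c_plus; apply c_mult; auto. }
  assert (cw : forall t, continuous w t).
  { intro t; unfold w, q3. apply c_sqrt. repeat apply c_plus; apply c_mult; auto. }
  set (K := fun t => b + S t - xv t / w t).
  assert (cK : forall t, continuous K t).
  { intro t; unfold K. apply c_minus. apply c_plus. apply c_const. auto.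
    apply c_div; auto. apply Rgt_not_eq, wpos. }
  assert (dK : forall t, t0 < t < t1 -> is_derive K t
     (k t * (G t * q3 (V1 t) (V2 t) (V3 t) - xv t ^ 2) / (w t ^ 3))).
  { intros t Ht. unfold K.
    pose proof (dX1 t Ht) as e1. pose proof (dX2 t Ht) as e2. pose proof (dX3 t Ht) as e3.
    pose proof (dV1 t Ht) as f1. pose proof (dV2 t Ht) as f2. pose proof (dV3 t Ht) as f3.
    pose proof (d_plus _ _ _ _ _ (d_plus _ _ _ _ _ (d_mult X1 V1 _ _ _ e1 f1) (d_mult X2 V2 _ _ _ e2 f2)) (d_mult X3 V3 _ _ _ e3 f3)) as Dxv.
    pose proof (d_plus _ _ _ _ _ (d_plus _ _ _ _ _ (d_mult V1 V1 _ _ _ f1 f1) (d_mult V2 V2 _ _ _ f2 f2)) (d_mult V3 V3 _ _ _ f3 f3)) as Dq.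
    pose proof (d_sqrt _ _ _ Dq (Hq t)) as Dw.
    pose proof (d_minus _ _ _ _ _ (d_plus _ _ _ _ _ (d_const b t) (HS t)) (d_div xv w t _ _ Dxv Dw (Rgt_not_eq _ _ (wpos t)))) as DK.
    eapply d_val. exact DK.
    change (sqrt (V1 t * V1 t + V2 t * V2 t + V3 t * V3 t)) with (w t). generalize (wsq t) (wpos t). unfold G, xv, q3, d3.
    generalize (w t) (k t) (X1 t) (X2 t) (X3 t) (V1 t) (V2 t) (V3 t).
    intros W kk a1 a2 a3 v1 v2 v3 E Wp.
    assert (W0 : W <> 0) by lra.
    replace (v1 * v1 + a1 * (- kk * a1) + (v2 * v2 + a2 * (- kk * a2)) + (v3 * v3 + a3 * (- kk * a3)))
      with (W * W - kk * (a1*a1+a2*a2+a3*a3)) by (rewrite E; ring).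
    rewrite <- E. rewrite sqrt_square by lra. match goal with |- ?a = ?b => change (@eq R a b) end. field. auto. }
  assert (K0 : K t0 = 0).
  { unfold K, b. rewrite HS0. field. apply Rgt_not_eq, wpos. }
  assert (Kpos : forall t, t0 <= t <= t1 -> 0 <= K t).
  { intros t Ht. rewrite <- K0.
    apply (mono K (fun t => k t * (G t * q3 (V1 t) (V2 t) (V3 t) - xv t ^ 2) / (w t ^ 3))); try lra.
    - auto.
    - intros s Hs. apply dK. lra.
    - intros s Hs. apply Rmult_le_pos. apply Rmult_le_pos. apply Rlt_le, Hk; lra.
      unfold G, xv. generalize (cs3 (X1 s) (X2 s) (X3 s) (V1 s) (V2 s) (V3 s)). lra.
      apply Rlt_le, Rinv_0_lt_compat. apply pow_lt, wpos. }
  set (H := fun t => G t0 + S t * (2 * b) + S t * S t - G t).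
  assert (cH : forall t, continuous H t).
  { intro t. unfold H, G, q3. apply c_minus. apply c_plus. apply c_plus. apply c_const.
    apply c_mult; auto. apply c_const. apply c_mult; auto.
    repeat apply c_plus; apply c_mult; auto. }
  assert (dH : forall t, t0 < t < t1 -> is_derive H t (2 * w t * K t)).
  { intros t Ht.
    pose proof (dX1 t Ht) as e1. pose proof (dX2 t Ht) as e2. pose proof (dX3 t Ht) as e3.
    pose proof (d_plus _ _ _ _ _ (d_plus _ _ _ _ _ (d_mult X1 X1 _ _ _ e1 e1) (d_mult X2 X2 _ _ _ e2 e2)) (d_mult X3 X3 _ _ _ e3 e3)) as DG.
    pose proof (d_minus _ _ _ _ _ (d_plus _ _ _ _ _ (d_plus _ _ _ _ _ (d_const (G t0) t) (d_mult S (fun _ => 2 * b) _ _ _ (HS t) (d_const (2*b) t))) (d_mult S S _ _ _ (HS t) (HS t))) DG) as DH.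
    eapply d_val. exact DH.
    change (sqrt (q3 (V1 t) (V2 t) (V3 t))) with (w t).
    unfold K, xv, d3.
    match goal with |- ?a = ?b => change (@eq R a b) end.
    field. apply Rgt_not_eq, wpos. }
  assert (Hm : H t0 <= H t1).
  { apply (mono H (fun t => 2 * w t * K t)); auto.
    intros s Hs. apply Rmult_le_pos. apply Rmult_le_pos. lra. apply Rlt_le, wpos. apply Kpos; lra. }
  unfold H in Hm. rewrite HS0 in Hm. unfold G, b, xv, w in Hm. assert (S t1 ^ 2 = S t1 * S t1) by ring. lra.
Qed.


Lemma is_derive_fst' {U V : NormedModule R_AbsRing} (f : R -> U * V) x l :
  is_derive f x l -> is_derive (fun t => fst (f t)) x (fst l).
Proof.
  intros H. unfold is_derive in *.
  eapply filterdiff_ext_lin.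
  - eapply (filterdiff_comp f (fun p : U * V => fst p)). exact H.
    apply filterdiff_linear, is_linear_fst.
  - intros y. reflexivity.
Qed.
Lemma is_derive_snd' {U V : NormedModule R_AbsRing} (f : R -> U * V) x l :
  is_derive f x l -> is_derive (fun t => snd (f t)) x (snd l).
Proof.
  intros H. unfold is_derive in *.
  eapply filterdiff_ext_lin.
  - eapply (filterdiff_comp f (fun p : U * V => snd p)). exact H.
    apply filterdiff_linear, is_linear_snd.
  - intros y. reflexivity.
Qed.

Lemma dvx (f : R -> vec) x l : is_derive f x l -> is_derive (fun t => vx (f t)) x (vx l).
Proof. intros H. unfold vx. apply (is_derive_fst' (fun t => fst (f t))). apply is_derive_fst'. exact H. Qed.
Lemma dvy (f : R -> vec) x l : is_derive f x l -> is_derive (fun t => vy (f t)) x (vy l).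
Proof. intros H. unfold vy. apply (is_derive_snd' (fun t => fst (f t))). apply is_derive_fst'. exact H. Qed.
Lemma dvz (f : R -> vec) x l : is_derive f x l -> is_derive (fun t => vz (f t)) x (vz l).
Proof. intros H. unfold vz. apply is_derive_snd'. exact H. Qed.

Lemma cvx (f : R -> vec) x : continuous f x -> continuous (fun t => vx (f t)) x.
Proof. intros H. apply (continuous_comp f (fun p : vec => vx p)). exact H.
  destruct (f x) as [[a b] c]. unfold vx.
  apply (continuous_comp (fun p : (R*R)*R => fst p) (fun p : R * R => fst p)).
  apply continuous_fst. apply continuous_fst. Qed.
Lemma cvy (f : R -> vec) x : continuous f x -> continuous (fun t => vy (f t)) x.
Proof. intros H. apply (continuous_comp f (fun p : vec => vy p)). exact H.
  destruct (f x) as [[a b] c]. unfold vy.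
  apply (continuous_comp (fun p : (R*R)*R => fst p) (fun p : R * R => snd p)).
  apply continuous_fst. apply continuous_snd. Qed.
Lemma cvz (f : R -> vec) x : continuous f x -> continuous (fun t => vz (f t)) x.
Proof. intros H. apply (continuous_comp f (fun p : vec => vz p)). exact H.
  destruct (f x) as [[a b] c]. unfold vz. apply continuous_snd. Qed.

Definition cl (T t : R) := Rmax 0 (Rmin T t).
Lemma cl_in T t : 0 <= T -> 0 <= cl T t <= T.
Proof. intros; unfold cl, Rmax, Rmin; repeat destruct Rle_dec; lra. Qed.
Lemma cl_id T t : 0 <= t <= T -> cl T t = t.
Proof. intros; unfold cl, Rmax, Rmin; repeat destruct Rle_dec; lra. Qed.
Lemma cl_lip T s t : 0 <= T -> Rabs (cl T s - cl T t) <= Rabs (s - t).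
Proof. intros; unfold cl, Rmax, Rmin; repeat destruct Rle_dec;
  unfold Rabs; repeat destruct Rcase_abs; lra. Qed.

Lemma cont_clamp (T : R) (f : R -> vec) : 0 <= T ->
  (forall t, 0 <= t <= T -> cont_on_at T f t) -> forall t, continuous (fun s => f (cl T s)) t.
Proof.
  intros HT Hf t. unfold continuous.
  apply (filterlim_comp _ _ _ (cl T) f _ (within (fun r => 0 <= r <= T) (locally (cl T t)))).
  - intros P [eps HP]. exists eps. intros y Hy. apply HP.
    + unfold ball in *; simpl in *. unfold AbsRing_ball in *. unfold abs, minus, plus, opp in *; simpl in *.
      eapply Rle_lt_trans. apply cl_lip; auto. exact Hy.
    + apply cl_in; auto.
  - apply Hf. apply cl_in; auto.
Qed.

Lemma vec_eta (a : vec) : a = (vx a, vy a, vz a).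
Proof. destruct a as [[p q] r]; reflexivity. Qed.
Lemma vadd0 a d : vadd a (vscale 0 d) = a.
Proof. destruct a as [[p q] r]; destruct d as [[p' q'] r'];
  unfold vadd, vscale, vx, vy, vz; simpl; f_equal; [f_equal|]; ring. Qed.
Lemma dot_nonneg a : 0 <= dot a a.
Proof. destruct a as [[p q] r]; unfold dot, vx, vy, vz; simpl; nra. Qed.
Lemma dot_pos a : a <> vzero -> 0 < dot a a.
Proof.
  destruct a as [[p q] r]; unfold dot, vx, vy, vz; simpl; intros H.
  destruct (Rle_or_lt (p*p+q*q+r*r) 0) as [Hle|]; auto. exfalso.
  assert (0 <= p*p) by nra. assert (0 <= q*q) by nra. assert (0 <= r*r) by nra.
  assert (p = 0) by (destruct (Rmult_integral p p); lra).
  assert (q = 0) by (destruct (Rmult_integral q q); lra).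
  assert (r = 0) by (destruct (Rmult_integral r r); lra).
  subst. apply H. reflexivity.
Qed.
Lemma enorm_sq a : enorm a * enorm a = dot a a.
Proof. apply sqrt_sqrt, dot_nonneg. Qed.
Lemma enorm_pos a : a <> vzero -> 0 < enorm a.
Proof. intros; apply sqrt_lt_R0, dot_pos; auto. Qed.
Lemma dot_scale_r a k w : dot a (vscale k w) = k * dot a w.
Proof. destruct a as [[p q] r]; destruct w as [[p' q'] r'];
  unfold dot, vscale, vx, vy, vz; simpl; ring. Qed.
Lemma dot_scale_both k d : dot (vscale k d) (vscale k d) = k*k*dot d d.
Proof. destruct d as [[p' q'] r']; unfold dot, vscale, vx, vy, vz; simpl; ring. Qed.
Lemma unit_dd w : w <> vzero -> dot (unit_dir w) (unit_dir w) = 1.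
Proof. intros H. unfold unit_dir. rewrite dot_scale_both, <- enorm_sq.
  assert (0 < enorm w) by (apply enorm_pos; auto). field. lra. Qed.
Lemma dot_unit a w : dot a (unit_dir w) = dot a w / enorm w.
Proof. unfold unit_dir. rewrite dot_scale_r. unfold Rdiv. ring. Qed.
Lemma dot_P a k d : dot (vadd a (vscale k d)) (vadd a (vscale k d)) = dot a a + 2*k*dot a d + k*k*dot d d.
Proof. destruct a as [[p q] r]; destruct d as [[p' q'] r'];
  unfold dot, vadd, vscale, vx, vy, vz; simpl; ring. Qed.
Lemma vsub_P a k d : vsub (vadd a (vscale k d)) a = vscale k d.
Proof. destruct a as [[p q] r]; destruct d as [[p' q'] r'];
  unfold vsub, vadd, vscale, vx, vy, vz; simpl; f_equal; [f_equal|]; ring. Qed.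
Lemma cs_dot a d : (dot a d)^2 <= dot a a * dot d d.
Proof. apply (cs3 (vx a) (vy a) (vz a) (vx d) (vy d) (vz d)). Qed.

Lemma quad_lemma b r2 R s : 0 <= r2 < R*R -> 0 <= s < - b + sqrt (b^2 + R*R - r2) ->
  r2 + 2*s*b + s*s < R*R.
Proof.
  intros H1 H2. set (D := b^2 + R*R - r2) in *.
  assert (HD : 0 <= D) by (unfold D; nra).
  assert (Hs := sqrt_sqrt D HD). assert (Hs0 := sqrt_pos D).
  set (q := sqrt D) in *.
  assert (Hqb : q*q > b*b) by (rewrite Hs; unfold D; nra).
  assert (q > b).
  { destruct (Rle_or_lt q b) as [Hc|Hc]; auto. exfalso.
    assert (q*q <= b*b) by (apply Rmult_le_compat; lra). lra. }
  assert (q > -b).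
  { destruct (Rle_or_lt q (-b)) as [Hc|Hc]; auto. exfalso.
    assert (q*q <= (-b)*(-b)) by (apply Rmult_le_compat; lra). lra. }
  assert ((s+b)*(s+b) < q*q).
  { assert (0 < q - (s+b)) by lra. assert (0 < q + (s+b)) by lra.
    assert (0 < (q - (s+b))*(q + (s+b))) by (apply Rmult_lt_0_compat; lra). nra. }
  unfold D in Hs. nra.
Qed.

Lemma lower_lemma b r R : 0 <= r -> b^2 <= r*r -> r < R ->
  R - r <= - b + sqrt (b^2 + R*R - r*r).
Proof.
  intros H0 H1 H2.
  assert (Hbr : b <= r) by nra.
  destruct (Rle_or_lt (R - r + b) 0).
  - assert (0 <= sqrt (b^2 + R*R - r*r)) by apply sqrt_pos. lra.
  - assert (R - r + b <= sqrt (b^2 + R*R - r*r)).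
    { rewrite <- (sqrt_square (R - r + b)) by lra. apply sqrt_le_1_alt. nra. }
    lra.
Qed.

Lemma loc_cl T t : 0 < t < T -> locally t (fun s => cl T s = s).
Proof.
  intros Ht. assert (He : 0 < Rmin t (T - t)) by (apply Rmin_pos; lra).
  exists (mkposreal _ He). intros y Hy. apply cl_id.
  unfold ball in Hy; simpl in Hy; unfold AbsRing_ball, abs, minus, plus, opp in Hy; simpl in Hy.
  apply Rabs_def2 in Hy. destruct Hy as [Hy1 Hy2].
  assert (Rmin t (T - t) <= t) by apply Rmin_l. assert (Rmin t (T - t) <= T - t) by apply Rmin_r.
  lra.
Qed.

Lemma der_cl T (f g : R -> vec) t : 0 < t < T -> is_derive f t (g t) ->
  is_derive (fun s => f (cl T s)) t (g t).
Proof.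
  intros Ht H. eapply is_derive_ext_loc; [|exact H].
  generalize (loc_cl T t Ht). apply filter_imp. intros s Hs. rewrite Hs. reflexivity.
Qed.

Theorem proposition2
  (Rad tau1 tauB : R) (x v a : R -> vec) (kappa : R -> R) :
  0 < Rad -> 0 < tau1 ->
  (forall t, 0 < t < tau1 -> is_derive x t (v t)) ->
  (forall t, 0 < t < tau1 -> is_derive v t (a t)) ->
  (forall t, 0 <= t <= tau1 -> cont_on_at tau1 x t) ->
  (forall t, 0 <= t <= tau1 -> cont_on_at tau1 v t) ->
  (forall t, 0 <= t <= tau1 -> cont_on_at tau1 a t) ->
  (forall t, 0 <= t <= tau1 -> v t <> vzero) ->
  (forall t, 0 <= t <= tau1 -> 0 < kappa t /\ a t = vscale (- kappa t) (x t)) ->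
  enorm (x 0) < Rad ->
  0 < tauB <= tau1 ->
  enorm (x tauB) = Rad ->
  (forall t, 0 <= t < tauB -> enorm (x t) < Rad) ->
  exists (tau : nat -> R) (P : nat -> vec),
    tau 0%nat = 0 /\
    (forall n, 0 <= tau n <= tauB) /\
    (forall n, ray_exit Rad (x (tau n)) (unit_dir (v (tau n))) (P n)) /\
    (forall n, arclength v (tau (S n)) =
               arclength v (tau n) + dist3 (x (tau n)) (P n)) /\
    is_lim_seq (fun T => sum_f_R0 (fun n => dist3 (x (tau n)) (P n)) T)
               (arclength v tauB).
Proof.
  intros HR Ht1 dx dv cx cv ca vnz hk hA0 hB hxB hfirst.
  assert (T0 : 0 <= tau1) by lra.
  set (c := cl tau1).
  set (xc := fun s => x (c s)). set (vc := fun s => v (c s)).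
  assert (cxc : forall t, continuous xc t) by exact (cont_clamp tau1 x T0 cx).
  assert (cvc : forall t, continuous vc t) by exact (cont_clamp tau1 v T0 cv).
  set (X1 := fun s => vx (xc s)). set (X2 := fun s => vy (xc s)). set (X3 := fun s => vz (xc s)).
  set (V1 := fun s => vx (vc s)). set (V2 := fun s => vy (vc s)). set (V3 := fun s => vz (vc s)).
  set (k := fun s => kappa (c s)).
  assert (cin : forall s, 0 <= c s <= tau1) by (intro; apply cl_in; auto).
  assert (cid : forall s, 0 <= s <= tau1 -> c s = s) by (intros; apply cl_id; auto).
  assert (cX1 : forall t, continuous X1 t) by (intro; apply cvx; auto).
  assert (cX2 : forall t, continuous X2 t) by (intro; apply cvy; auto).
  assert (cX3 : forall t, continuous X3 t) by (intro; apply cvz; auto).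
  assert (cV1 : forall t, continuous V1 t) by (intro; apply cvx; auto).
  assert (cV2 : forall t, continuous V2 t) by (intro; apply cvy; auto).
  assert (cV3 : forall t, continuous V3 t) by (intro; apply cvz; auto).
  assert (Hq : forall t, 0 < q3 (V1 t) (V2 t) (V3 t)).
  { intro t. apply (dot_pos (vc t)). apply vnz. auto. }
  assert (dxc : forall t, 0 < t < tau1 -> is_derive xc t (v t)).
  { intros t Ht. apply (der_cl tau1 x v t Ht). auto. }
  assert (dvc : forall t, 0 < t < tau1 -> is_derive vc t (a t)).
  { intros t Ht. apply (der_cl tau1 v a t Ht). auto. }
  assert (Hvt : forall t, 0 < t < tau1 -> vc t = v t).
  { intros t Ht. unfold vc. rewrite cid; auto; lra. }
  assert (Hat : forall t, 0 < t < tau1 -> a t = vscale (- k t) (xc t)).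
  { intros t Ht. unfold k, xc. rewrite cid by lra. apply hk; lra. }
  assert (dX1 : forall t, 0 < t < tau1 -> is_derive X1 t (V1 t)).
  { intros t Ht. unfold V1. rewrite Hvt by auto. apply dvx, dxc; auto. }
  assert (dX2 : forall t, 0 < t < tau1 -> is_derive X2 t (V2 t)).
  { intros t Ht. unfold V2. rewrite Hvt by auto. apply dvy, dxc; auto. }
  assert (dX3 : forall t, 0 < t < tau1 -> is_derive X3 t (V3 t)).
  { intros t Ht. unfold V3. rewrite Hvt by auto. apply dvz, dxc; auto. }
  assert (dV1 : forall t, 0 < t < tau1 -> is_derive V1 t (- k t * X1 t)).
  { intros t Ht. eapply d_val. apply dvx, dvc; auto. rewrite Hat by auto. reflexivity. }
  assert (dV2 : forall t, 0 < t < tau1 -> is_derive V2 t (- k t * X2 t)).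
  { intros t Ht. eapply d_val. apply dvy, dvc; auto. rewrite Hat by auto. reflexivity. }
  assert (dV3 : forall t, 0 < t < tau1 -> is_derive V3 t (- k t * X3 t)).
  { intros t Ht. eapply d_val. apply dvz, dvc; auto. rewrite Hat by auto. reflexivity. }
  assert (kpos : forall t, 0 < k t) by (intro t; apply hk; auto).
  set (w := fun t => sqrt (q3 (V1 t) (V2 t) (V3 t))).
  assert (wpos : forall t, 0 < w t) by (intro; apply sqrt_lt_R0; auto).
  assert (cw : forall t, continuous w t).
  { intro t; unfold w, q3. apply c_sqrt. repeat apply c_plus; apply c_mult; auto. }
  set (L := fun t => RInt w 0 t).
  assert (dL : forall t, is_derive L t (w t)).
  { intro t. apply (is_derive_RInt w L 0 t); auto.
    exists (mkposreal 1 Rlt_0_1). intros y _. apply (RInt_correct w 0 y).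
    apply ex_RInt_continuous. intros; auto. }
  assert (cL : forall t, continuous L t).
  { intro t. apply (ex_derive_continuous (K:=R_AbsRing) (V:=R_NormedModule) L). eexists; apply dL. }
  assert (cLpt : forall t, continuity_pt L t) by (intro t; apply continuity_pt_filterlim, cL).
  assert (Linc : forall s t, s < t -> L s < L t).
  { intros s t Hst. destruct (MVT_gen L s t w) as [z [_ Hz]].
    - intros; apply dL.
    - intros; apply cLpt.
    - assert (0 < w z) by auto. nra. }
  assert (L0 : L 0 = 0).
  { unfold L. rewrite RInt_point. reflexivity. }
  assert (arc : forall t, 0 <= t <= tau1 -> arclength v t = L t).
  { intros t Ht. unfold arclength, L. apply RInt_ext. intros y Hy.
    rewrite Rmin_left in Hy by lra. rewrite Rmax_right in Hy by lra.
    unfold w, V1, V2, V3, vc. rewrite cid by lra. reflexivity. }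
  set (bb := fun t => dot (x t) (unit_dir (v t))).
  set (u := fun t => if Req_EM_T (enorm (x t)) Rad then 0
                     else - bb t + sqrt (bb t ^ 2 + Rad * Rad - dot (x t) (x t))).
  set (Pt := fun t => vadd (x t) (vscale (u t) (unit_dir (v t)))).
  assert (inside : forall t, 0 <= t <= tauB -> enorm (x t) <> Rad -> enorm (x t) < Rad).
  { intros t Ht Hne. destruct (Req_dec t tauB) as [->|]. contradiction. apply hfirst; lra. }
  assert (bb_le : forall t, 0 <= t <= tau1 -> bb t ^ 2 <= enorm (x t) * enorm (x t)).
  { intros t Ht. unfold bb. rewrite enorm_sq.
    generalize (cs_dot (x t) (unit_dir (v t))). rewrite unit_dd by auto. lra. }
  assert (enn : forall p, 0 <= enorm p) by (intro; apply sqrt_pos).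
  assert (upos : forall t, 0 <= t <= tauB -> 0 <= u t).
  { intros t Ht. unfold u. destruct Req_EM_T as [E|E]. lra.
    assert (H1 := inside t Ht E). assert (H2 := bb_le t ltac:(lra)).
    assert (H3 := lower_lemma (bb t) (enorm (x t)) Rad (enn _) H2 H1).
    rewrite <- enorm_sq. lra. }
  assert (ulow : forall t, 0 <= t < tauB -> Rad - enorm (x t) <= u t).
  { intros t Ht. unfold u. destruct Req_EM_T as [E|E].
    - assert (H1 := hfirst t Ht). lra.
    - assert (H1 := inside t ltac:(lra) E). assert (H2 := bb_le t ltac:(lra)).
      assert (H3 := lower_lemma (bb t) (enorm (x t)) Rad (enn _) H2 H1).
      rewrite <- enorm_sq. lra. }
  assert (ray : forall t, 0 <= t <= tauB -> ray_exit Rad (x t) (unit_dir (v t)) (Pt t)).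
  { intros t Ht. split; [|split].
    - exists (u t). split; auto.
    - unfold Pt, u. destruct Req_EM_T as [E|E].
      + rewrite vadd0. exact E.
      + assert (H1 := inside t Ht E).
        unfold enorm at 1. rewrite dot_P, unit_dd by (apply vnz; lra).
        fold (bb t).
        set (r2 := dot (x t) (x t)).
        assert (Hr2 : 0 <= r2 < Rad * Rad).
        { unfold r2. split. apply dot_nonneg. rewrite <- enorm_sq.
          assert (0 <= enorm (x t)) by auto. nra. }
        set (D := bb t ^ 2 + Rad * Rad - r2).
        assert (HD : 0 <= D) by (unfold D; nra).
        assert (Hs := sqrt_sqrt D HD).
        replace (r2 + 2 * (- bb t + sqrt D) * bb t + (- bb t + sqrt D) * (- bb t + sqrt D) * 1)
          with (Rad * Rad).
        apply sqrt_square; lra.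
        symmetry. transitivity (r2 - bb t ^ 2 + sqrt D * sqrt D). ring.
        rewrite Hs. unfold D. ring.
    - intros E. unfold Pt, u. destruct Req_EM_T as [_|E']. apply vadd0. contradiction. }
  assert (dist_u : forall t, 0 <= t <= tauB -> dist3 (x t) (Pt t) = u t).
  { intros t Ht. unfold dist3, Pt. rewrite vsub_P. unfold enorm.
    rewrite dot_scale_both, unit_dd by (apply vnz; lra). rewrite Rmult_1_r.
    apply sqrt_square. auto. }
  assert (key : forall t, 0 <= t < tauB -> L t + u t <= L tauB).
  { intros t Ht.
    assert (sub : forall s, t < s < tauB -> 0 < s < tau1) by (intros; lra).
    assert (HS : forall s, is_derive (fun s => L s - L t) s (sqrt (q3 (V1 s) (V2 s) (V3 s)))).
    { intro s. eapply d_val. apply (d_minus _ _ _ _ _ (dL s) (d_const (L t) s)).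
      unfold w. apply Rminus_0_r. }
    assert (Hc := core X1 X2 X3 V1 V2 V3 k (fun s => L s - L t) t tauB ltac:(lra)
      cX1 cX2 cX3 cV1 cV2 cV3
      (fun s Hs => dX1 s (sub s Hs)) (fun s Hs => dX2 s (sub s Hs)) (fun s Hs => dX3 s (sub s Hs))
      (fun s Hs => dV1 s (sub s Hs)) (fun s Hs => dV2 s (sub s Hs)) (fun s Hs => dV3 s (sub s Hs))
      (fun s _ => kpos s) Hq HS (Rminus_diag_eq _ _ eq_refl)).
    change (q3 (X1 tauB) (X2 tauB) (X3 tauB)) with (dot (xc tauB) (xc tauB)) in Hc.
    change (q3 (X1 t) (X2 t) (X3 t)) with (dot (xc t) (xc t)) in Hc.
    change (d3 (X1 t) (X2 t) (X3 t) (V1 t) (V2 t) (V3 t)) with (dot (xc t) (vc t)) in Hc.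
    change (sqrt (q3 (V1 t) (V2 t) (V3 t))) with (enorm (vc t)) in Hc.
    unfold xc, vc in Hc. rewrite (cid t), (cid tauB) in Hc by lra.
    rewrite <- dot_unit in Hc. fold (bb t) in Hc.
    rewrite <- enorm_sq, hxB in Hc.
    destruct (Rle_or_lt (L t + u t) (L tauB)) as [Hle|Hlt]; auto. exfalso.
    assert (Hxt := hfirst t Ht).
    unfold u in Hlt. destruct Req_EM_T as [E|E]. lra.
    assert (Hsig : 0 <= L tauB - L t) by (assert (L t < L tauB) by (apply Linc; lra); lra).
    assert (Hr2 : 0 <= dot (x t) (x t) < Rad * Rad).
    { split. apply dot_nonneg. rewrite <- enorm_sq. assert (0 <= enorm (x t)) by auto. nra. }
    assert (Hq2 := quad_lemma (bb t) (dot (x t) (x t)) Rad (L tauB - L t) Hr2 ltac:(lra)).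
    assert ((L tauB - L t) ^ 2 = (L tauB - L t) * (L tauB - L t)) by ring.
    lra. }
  set (spec := fun t t' => t <= t' <= tauB /\ L t' = L t + u t).
  assert (ex_spec : forall t, 0 <= t <= tauB -> exists t', spec t t').
  { intros t Ht. destruct (Req_dec t tauB) as [->|Hne].
    - exists tauB. split. lra. unfold u. destruct Req_EM_T as [_|E]. symmetry; apply Rplus_0_r. contradiction.
    - assert (Hlt : t < tauB) by lra.
      assert (Hk := key t ltac:(lra)). assert (Hu := upos t Ht).
      assert (HL := Linc t tauB Hlt).
      destruct (IVT_gen L t tauB (L t + u t) cLpt) as [z [Hz1 Hz2]].
      + rewrite Rmin_left, Rmax_right by lra. lra.
      + rewrite Rmin_left, Rmax_right in Hz1 by lra. exists z. split; auto. }
  set (nx := fun t => epsilon (inhabits 0) (spec t)).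
  set (tau := fix f (n : nat) : R := match n with O => 0 | S m => nx (f m) end).
  assert (tau_in : forall n, 0 <= tau n <= tauB).
  { induction n as [|n IH]. simpl. lra.
    change (tau (S n)) with (nx (tau n)).
    pose proof (epsilon_spec (inhabits 0) (spec (tau n)) (ex_spec _ IH)) as H. change (spec (tau n) (nx (tau n))) in H. destruct H as [H1 _]. lra. }
  assert (tau_step : forall n, spec (tau n) (tau (S n))).
  { intro n. change (tau (S n)) with (nx (tau n)).
    apply epsilon_spec. apply ex_spec. auto. }
  exists tau, (fun n => Pt (tau n)).
  split; [reflexivity|]. split; [exact tau_in|]. split.
  { intro n. apply ray. auto. }
  assert (Hs : forall n, dist3 (x (tau n)) (Pt (tau n)) = L (tau (S n)) - L (tau n)).
  { intro n. rewrite dist_u by auto. destruct (tau_step n) as [_ H]. lra. }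
  split.
  { intro n. rewrite !arc by (generalize (tau_in n) (tau_in (S n)); lra). rewrite Hs. symmetry. apply Rplus_minus. }
  rewrite arc by lra.
  assert (Hsum : forall T, sum_f_R0 (fun n => dist3 (x (tau n)) (Pt (tau n))) T = L (tau (S T))).
  { induction T as [|T IH]. change (sum_f_R0 (fun n => dist3 (x (tau n)) (Pt (tau n))) 0) with (dist3 (x (tau 0%nat)) (Pt (tau 0%nat))). rewrite Hs. change (tau 0%nat) with 0. rewrite L0. apply Rminus_0_r.
    rewrite tech5, IH, Hs. apply Rplus_minus. }
  apply (is_lim_seq_ext (fun T => L (tau (S T)))). intro T. rewrite Hsum. reflexivity.
  apply -> (is_lim_seq_incr_1 (fun n => L (tau n))).
  assert (tau_mono : forall n, tau n <= tau (S n)) by (intro n; destruct (tau_step n) as [H _]; lra).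
  assert (Hlim := Lim_seq_correct tau (ex_lim_seq_incr tau tau_mono)).
  assert (Hub := is_lim_seq_le tau (fun _ => tauB) _ _ (fun n => proj2 (tau_in n)) Hlim (is_lim_seq_const tauB)).
  assert (Hlb := is_lim_seq_le (fun _ => 0) tau _ _ (fun n => proj1 (tau_in n)) (is_lim_seq_const 0) Hlim).
  destruct (Lim_seq tau) as [r| |]; simpl in Hub, Hlb; try contradiction.
  assert (HLr := is_lim_seq_continuous L tau r (cLpt r) Hlim).
  destruct (Req_dec r tauB) as [<-|Hne]; auto.
  exfalso.
  assert (Hr : 0 <= r < tauB) by lra.
  assert (tau_le := is_lim_seq_incr_compare tau r Hlim tau_mono).
  assert (Hsl : is_lim_seq (fun n => L (tau (S n)) - L (tau n)) (L r - L r)).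
  { apply is_lim_seq_minus'; auto. apply -> (is_lim_seq_incr_1 (fun n => L (tau n))). auto. }
  set (E := fun t => enorm (xc t)).
  assert (cE : forall t, continuity_pt E t).
  { intro t. apply continuity_pt_filterlim.
    change (continuous (fun t => sqrt (X1 t * X1 t + X2 t * X2 t + X3 t * X3 t)) t).
    apply c_sqrt. repeat apply c_plus; apply c_mult; auto. }
  assert (HE := is_lim_seq_continuous E tau r (cE r) Hlim).
  assert (HE2 := is_lim_seq_minus' (fun _ => Rad) (fun n => E (tau n)) Rad (E r) (is_lim_seq_const Rad) HE).
  assert (Hcmp : forall n, Rad - E (tau n) <= L (tau (S n)) - L (tau n)).
  { intro n. rewrite <- Hs, dist_u by auto. unfold E, xc. rewrite cid by (generalize (tau_in n); lra).
    apply ulow. generalize (tau_le n) (tau_in n). lra. }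
  assert (Hfin := is_lim_seq_le _ _ _ _ Hcmp HE2 Hsl). simpl in Hfin.
  assert (Hxr := hfirst r Hr). unfold E, xc in Hfin. rewrite cid in Hfin by lra.
  lra.
Qed.
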